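(* In the setting described in the context, suppose $T$ and $A$ are irreducible. Then for each $j\in\{1,\dots,M\}$ there exists a nonzero integer $k_j$ such that $(0,j)\to(k_j,j)$ in the Markov additive process with kernel $\{\Gamma_A(k)\}_{k\in\mathbb Z}$.
   Context: Let $M_0,M$ be positive integers. Consider a discrete-time Markov chain of M/G/1 type with state space $\{(0,j):1\le j\le M_0\}\cup\{(k,j):k\ge1,1\le j\le M\}$ and transition matrix in lexicographic order \[ T=\begin{pmatrix}B(0)&B(1)&B(2)&\cdots\\ C(0)&A(1)&A(2)&\cdots\\ O&A(0)&A(1)&\cdots\\ O&O&A(0)&\cdots\\ \vdots&\vdots&\vdots&\ddots\end{pmatrix}, \] with nonnegative blocks $A(k)$ ($M\times M$), $B(0)$, $B(k)$, $C(0)$ of compatible sizes, $A=\sum_{k\ge0}A(k)$ stochastic, $B(0)e+\sum_{k\ge1}B(k)e=e$. Let $\Gamma_A(k)=A(k+1)$ for $k\ge-1$ and $\Gamma_A(k)=O$ for $k\le-2$. The Markov additive process with kernel $\{\Gamma_A(k)\}$ on $\mathbb Z\times\{1,\dots,M\}$ moves from $(k_0,i)$ to $(k_0+k,j)$ with probability $[\Gamma_A(k)]_{i,j}$; $(k_1,j_1)\to(k_2,j_2)$ means $(k_2,j_2)$ is reached from $(k_1,j_1)$ with positive probability along some path of positive length. *)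

(* Defs.v *)
From HB Require Import structures.
From mathcomp Require Import all_boot all_order all_algebra.
From mathcomp Require Import boolp classical_sets reals topology normedtype sequences.
Set Implicit Arguments. Unset Strict Implicit. Unset Printing Implicit Defensive.
Import Order.TTheory GRing.Theory Num.Theory numFieldNormedType.Exports.
Local Open Scope ring_scope.

Inductive reach (R : realType) (S : Type) (P : S -> S -> R) : S -> S -> Prop :=
| reach1 x y : 0 < P x y -> reach P x y
| reachS x y z : 0 < P x y -> reach P y z -> reach P x z.

Definition irreducible_mx (R : realType) (n : nat) (X : 'M[R]_n) : Prop :=
  forall i j : 'I_n, reach (fun a b : 'I_n => X a b) i j.

(* States of the M/G/1-type chain:
   L0 j      = state (0, j), j : 'I_M0  (phases 1..M0 shifted to 0..M0-1)
   Lk k j    = state (k+1, j), j : 'I_M  (level k+1 >= 1). *)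
Inductive mg1_state (M0 M : nat) : Type :=
| L0 of 'I_M0
| Lk of nat & 'I_M.

(* Transition probabilities of T.
   B0 = B(0); B k = B(k) for k >= 1 (the value B 0 is never used);
   C0 = C(0); A k = A(k). *)
Definition mg1_T (R : realType) (M0 M : nat)
  (B0 : 'M[R]_(M0, M0)) (B : nat -> 'M[R]_(M0, M)) (C0 : 'M[R]_(M, M0))
  (A : nat -> 'M[R]_M) (x y : mg1_state M0 M) : R :=
  match x, y with
  | L0 i, L0 j => B0 i j
  | L0 i, Lk l j => B l.+1 i j
  | Lk 0 i, L0 j => C0 i j
  | Lk _ _, L0 _ => 0
  | Lk k i, Lk l j =>
      if (k <= l.+1)%N then A (l.+1 - k)%N i j else 0
  end.

Definition Asum (R : realType) (M : nat) (A : nat -> 'M[R]_M) : 'M[R]_M :=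
  \matrix_(i, j) (limn (series (fun k => (A k i j : R)))).

Definition GammaA (R : realType) (M : nat) (A : nat -> 'M[R]_M) (k : int) : 'M[R]_M :=
  if (-1 <= k)%R then A (absz (k + 1)) else 0.

Definition map_kernel (R : realType) (M : nat) (A : nat -> 'M[R]_M)
  (x y : int * 'I_M) : R :=
  GammaA A (y.1 - x.1) x.2 y.2.

(* Main.v *)
Require Import Defs.
From HB Require Import structures.
From mathcomp Require Import all_boot all_order all_algebra.
From mathcomp Require Import boolp classical_sets reals topology normedtype sequences.
From mathcomp Require Import zify.
Import Order.TTheory GRing.Theory Num.Theory numFieldNormedType.Exports.
Local Open Scope ring_scope.

Lemma reach_trans (R : realType) (S : Type) (P : S -> S -> R) x y z :
  reach P x y -> reach P y z -> reach P x z.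
Proof.
elim=> [a b Hab|a b c Hab _ IH] Hz; first exact: reachS Hab Hz.
exact: reachS Hab (IH Hz).
Qed.

Lemma map_transl (R : realType) (M : nat) (A : nat -> 'M[R]_M) x y (t : int) :
  reach (map_kernel A) x y -> reach (map_kernel A) (x.1 + t, x.2) (y.1 + t, y.2).
Proof.
have E : forall a b : int * 'I_M, map_kernel A (a.1 + t, a.2) (b.1 + t, b.2) = map_kernel A a b.
  by move=> a b; rewrite /map_kernel /= (_ : b.1 + t - (a.1 + t) = b.1 - a.1) //; lia.
elim=> [a b Hab|a b c Hab _ IH]; first by apply: reach1; rewrite E.
by apply: reachS IH; rewrite E.
Qed.

Lemma edge_TA (R : realType) (M0 M : nat)
  (B0 : 'M[R]_(M0, M0)) (B : nat -> 'M[R]_(M0, M)) (C0 : 'M[R]_(M, M0))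
  (A : nat -> 'M[R]_M) k i l j :
  0 < mg1_T B0 B C0 A (Lk M0 k i) (Lk M0 l j) -> 0 < map_kernel A (k%:Z, i) (l%:Z, j).
Proof.
rewrite /mg1_T /map_kernel /GammaA /=.
have Hm : forall T (a : T), match k with 0%N | _ => a end = a by case: k.
rewrite !Hm.
case: ifP => Hkl; last by rewrite ltxx.
have -> : (-1 <= l%:Z - k%:Z)%R = true by apply/idP; lia.
have -> : absz (l%:Z - k%:Z + 1) = (l.+1 - k)%N by lia.
by [].
Qed.

Lemma Asum_pos (R : realType) (M : nat) (A : nat -> 'M[R]_M) a b :
  (forall k i j, 0 <= A k i j) -> 0 < Asum A a b -> exists k, 0 < A k a b.
Proof.
move=> Hnn Hp; apply: contrapT => Hno; move: Hp.
have H0 : forall k, A k a b = 0.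
  move=> k; apply/eqP; rewrite eq_le Hnn andbT leNgt; apply/negP => H.
  by apply: Hno; exists k.
have -> : Asum A a b = 0.
  rewrite /Asum mxE.
  have -> : series (fun k => A k a b) = fun _ => 0.
    apply: funext => n; rewrite /series /=.
    by apply: big1 => k _; rewrite H0.
  exact: lim_cst.
by rewrite ltxx.
Qed.

Lemma A_reach (R : realType) (M : nat) (A : nat -> 'M[R]_M) a b :
  (forall k i j, 0 <= A k i j) -> reach (fun x y : 'I_M => Asum A x y) a b ->
  exists d : int, reach (map_kernel A) (0%R, a) (d, b).
Proof.
move=> Hnn; elim=> [x y Hxy|x y z Hxy _ [d Hd]].
  have [k Hk] := @Asum_pos _ _ A _ _ Hnn Hxy.
  exists (k%:Z - 1); apply: reach1; rewrite /map_kernel /GammaA /=.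
  have -> : (-1 <= k%:Z - 1 - 0)%R = true by apply/idP; lia.
  by have -> : absz (k%:Z - 1 - 0 + 1) = k by lia.
have [k Hk] := @Asum_pos _ _ A _ _ Hnn Hxy.
exists (d + (k%:Z - 1)); apply: reachS (_ : reach _ (k%:Z - 1, y) _).
  rewrite /map_kernel /GammaA /=.
  have -> : (-1 <= k%:Z - 1 - 0)%R = true by apply/idP; lia.
  by have -> : absz (k%:Z - 1 - 0 + 1) = k by lia.
have := @map_transl _ _ A _ _ (k%:Z - 1) Hd => /=.
by rewrite add0r.
Qed.

Lemma T_path (R : realType) (M0 M : nat)
  (B0 : 'M[R]_(M0, M0)) (B : nat -> 'M[R]_(M0, M)) (C0 : 'M[R]_(M, M0))
  (A : nat -> 'M[R]_M) x y :
  reach (mg1_T B0 B C0 A) x y -> forall n i y0, x = Lk M0 n i -> y = L0 M y0 ->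
  exists i', forall z, reach (map_kernel A) (0%R, i') z -> reach (map_kernel A) (n%:Z, i) z.
Proof.
elim=> [a b Hab|a b c Hab _ IH] n i y0 Ea Eb.
  subst; exists i => z; case: n Hab => [|n] //=.
  by rewrite ltxx.
subst; case: b Hab IH => [b0|m i2] Hab IH.
  exists i => z; case: n Hab => [|n] //=.
  by rewrite ltxx.
have [i' Hi'] := IH m i2 y0 erefl erefl.
exists i' => z Hz; apply: reachS (Hi' _ Hz).
exact: edge_TA Hab.
Qed.

Theorem proposition2p8 (R : realType) (M0 M : nat)
  (B0 : 'M[R]_(M0, M0)) (B : nat -> 'M[R]_(M0, M)) (C0 : 'M[R]_(M, M0))
  (A : nat -> 'M[R]_M) :
  (0 < M0)%N -> (0 < M)%N ->
  (forall k i j, 0 <= A k i j) ->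
  (forall i j, 0 <= B0 i j) ->
  (forall k, (1 <= k)%N -> forall i j, 0 <= B k i j) ->
  (forall i j, 0 <= C0 i j) ->
  (* A = sum_k A(k) is stochastic *)
  (forall i j, cvgn (series (fun k => A k i j))) ->
  (forall i, \sum_j Asum A i j = 1) ->
  (* B(0) e + sum_{k>=1} B(k) e = e *)
  (forall i, (\sum_j B0 i j) + limn (series (fun k => \sum_j B k.+1 i j)) = 1) ->
  (forall i, cvgn (series (fun k => \sum_j B k.+1 i j))) ->
  (* T and A irreducible *)
  (forall x y : mg1_state M0 M, reach (mg1_T B0 B C0 A) x y) ->
  irreducible_mx (Asum A) ->
  forall j : 'I_M, exists k : int, k != 0 /\ reach (map_kernel A) (0%R, j) (k, j).
Proof.
move=> HM0 HM Hnn _ _ _ _ _ _ _ HT HA j.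
have /fin_all_exists [f Hf] : forall i : 'I_M, exists b : int,
    reach (map_kernel A) (0%R, i) (b, j) := fun i => @A_reach _ _ A i j Hnn (HA i j).
set N := (\sum_i absz (f i)).+1.
have HP := HT (Lk M0 N j) (L0 M (Ordinal HM0)).
have [i' Hi'] := @T_path _ _ _ _ _ _ _ _ _ HP N j _ erefl erefl.
have H1 := @map_transl _ _ A _ _ (- N%:Z) (Hi' _ (Hf i')).
move: H1 => /=; rewrite addrN => H1.
exists (f i' - N%:Z); split=> //.
have Hle : (absz (f i') <= \sum_i absz (f i))%N.
  by rewrite (bigD1 i') //= leq_addr.
apply/eqP => E; move: Hle; rewrite /N in E; lia.
Qed.
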